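(* Let $f,g:\mathbb{R}^n\to\mathbb{R}$ be convex functions, and suppose $\nabla f$ exists and is Lipschitz continuous with constant $L(f)>0$. Let $F=f+g$ and let $x^*$ be an optimal solution of $\min_x F(x)$. Fix $0<\beta\le 1$ and $\mu$ with $\beta/L(f)\le\mu\le 1/L(f)$. Run the following algorithm (Alternating linearization method with skipping step) from $x^0=y^0\in\mathbb{R}^n$ and $\lambda^0$ with $-\lambda^0\in\partial g(y^0)$: for $k=0,1,2,\dots$, 1. $x^{k+1}:=\arg\min_x Q(x,y^k)$, where $Q(x,y^k):=f(x)+g(y^k)-\langle\lambda^k,x-y^k\rangle+\frac{1}{2\mu}\|x-y^k\|_2^2$; 2. if $F(x^{k+1})>Q(x^{k+1},y^k)$, then reset $x^{k+1}:=y^k$; 3. $y^{k+1}:=\arg\min_y Q_f(x^{k+1},y)$, where $Q_f(x,y):=f(x)+\langle\nabla f(x),y-x\rangle+\frac{1}{2\mu}\|y-x\|_2^2+g(y)$; 4. $\lambda^{k+1}:=\nabla f(x^{k+1})-(x^{k+1}-y^{k+1})/\mu$. For $k\ge 1$ let $k_n$ denote the number of iterations among the first $k$ iterations (indices $0,\dots,k-1$) in which the inequality $F(x^{j+1})\le Q(x^{j+1},y^j)$ held in step 2 (i.e., no reset occurred). Then for every $k\ge1$, $$F(y^k)-F(x^* )\le\frac{\|x^0-x^*\|^2}{2\mu(k+k_n)}.$$ Consequently $F(y^k)\to F(x^* )$, and the number of iterations needed to obtain $F(y^k)-F(x^* )\le\epsilon$ is $O(1/\epsilon)$ (specifically, it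 suffices that $k\ge \frac{L(f)\|x^0-x^*\|^2}{2\beta\epsilon}$).
   Context: $\partial g(y)$ denotes the subdifferential of the convex function $g$ at $y$. All norms are Euclidean norms. *)

(* Defs.v *)
From HB Require Import structures.
From mathcomp Require Import all_boot all_order all_algebra.
From mathcomp Require Import all_classical all_reals all_analysis.
Set Implicit Arguments. Unset Strict Implicit. Unset Printing Implicit Defensive.
Import Order.TTheory GRing.Theory Num.Theory.
Import numFieldNormedType.Exports.
Local Open Scope ring_scope.

Definition dotv {R : realType} {n : nat} (u v : 'rV[R]_n) : R :=
  \sum_(i < n) u ord0 i * v ord0 i.
Definition enorm {R : realType} {n : nat} (u : 'rV[R]_n) : R :=
  Num.sqrt (dotv u u).

Definition convex_fun {R : realType} {n : nat} (f : 'rV[R]_n -> R) : Prop :=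
  forall (x y : 'rV[R]_n) (t : R), 0 <= t -> t <= 1 ->
    f ((1 - t) *: x + t *: y) <= (1 - t) * f x + t * f y.

Definition in_subdiff {R : realType} {n : nat} (g : 'rV[R]_n -> R)
  (y v : 'rV[R]_n) : Prop :=
  forall z, g y + dotv v (z - y) <= g z.

Definition is_gradient {R : realType} {n : nat} (f : 'rV[R]_n -> R)
  (gradf : 'rV[R]_n -> 'rV[R]_n) : Prop :=
  forall x, differentiable f x /\ forall h, 'd f x h = dotv (gradf x) h.

Definition Qfun {R : realType} {n : nat} (f g : 'rV[R]_n -> R) (mu : R)
  (lam y x : 'rV[R]_n) : R :=
  f x + g y - dotv lam (x - y) + (2 * mu)^-1 * enorm (x - y) ^+ 2.

Definition Qf {R : realType} {n : nat} (f g : 'rV[R]_n -> R)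
  (gradf : 'rV[R]_n -> 'rV[R]_n) (mu : R) (x y : 'rV[R]_n) : R :=
  f x + dotv (gradf x) (y - x) + (2 * mu)^-1 * enorm (y - x) ^+ 2 + g y.

(* Main.v *)
Require Import Defs.
From HB Require Import structures.
From mathcomp Require Import all_boot all_order all_algebra.
From mathcomp Require Import all_classical all_reals all_analysis.
From mathcomp Require Import ring lra.
Import Order.TTheory GRing.Theory Num.Theory.
Import numFieldNormedType.Exports.
Local Open Scope classical_set_scope.
Local Open Scope ring_scope.
Section Dot.
Variables (R : realType) (n : nat).
Implicit Types u v w : 'rV[R]_n.

Lemma dotvC u v : dotv u v = dotv v u.
Proof. by rewrite /dotv; apply: eq_bigr => i _; rewrite mulrC. Qed.
Lemma dotvDl u v w : dotv (u + v) w = dotv u w + dotv v w.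
Proof. by rewrite /dotv -big_split; apply: eq_bigr => i _; rewrite !mxE mulrDl. Qed.
Lemma dotvNl u w : dotv (- u) w = - dotv u w.
Proof. by rewrite /dotv -sumrN; apply: eq_bigr => i _; rewrite !mxE mulNr. Qed.
Lemma dotvZl (a : R) u w : dotv (a *: u) w = a * dotv u w.
Proof. by rewrite /dotv mulr_sumr; apply: eq_bigr => i _; rewrite !mxE mulrA. Qed.
Lemma dotvBl u v w : dotv (u - v) w = dotv u w - dotv v w.
Proof. by rewrite dotvDl dotvNl. Qed.
Lemma dotvDr u v w : dotv w (u + v) = dotv w u + dotv w v.
Proof. by rewrite dotvC dotvDl !(dotvC w). Qed.
Lemma dotvNr u w : dotv w (- u) = - dotv w u.
Proof. by rewrite dotvC dotvNl dotvC. Qed.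
Lemma dotvZr (a : R) u w : dotv w (a *: u) = a * dotv w u.
Proof. by rewrite dotvC dotvZl dotvC. Qed.
Lemma dotvBr u v w : dotv w (u - v) = dotv w u - dotv w v.
Proof. by rewrite dotvDr dotvNr. Qed.
Lemma dotv_ge0 u : 0 <= dotv u u.
Proof. by rewrite /dotv; apply: sumr_ge0 => i _; rewrite -expr2 sqr_ge0. Qed.
Lemma enorm2 u : enorm u ^+ 2 = dotv u u.
Proof. by rewrite /enorm sqr_sqrtr // dotv_ge0. Qed.
Lemma enorm_ge0 u : 0 <= enorm u.
Proof. exact: sqrtr_ge0. Qed.

Lemma lim_lemma (A B C : R) : 0 <= C ->
  (forall t : R, 0 < t -> t <= 1 -> B - t * C <= A) -> B <= A.
Proof.
move=> C0 H; rewrite leNgt; apply/negP => AB.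
have hp : 0 < B - A + C + 1 by lra.
pose t := (B - A) / (B - A + C + 1).
have t0 : 0 < t by rewrite /t divr_gt0 //; lra.
have t1 : t <= 1 by rewrite /t ler_pdivrMr //; lra.
have tC : t * C < B - A.
  rewrite /t mulrAC ltr_pdivrMr //.
  have : 0 < B - A by lra.
  nra.
have := H t t0 t1; lra.
Qed.

Lemma vecE1 (t : R) u w : (1 - t) *: w + t *: u = w + t *: (u - w).
Proof. by apply/rowP => j; rewrite !mxE; ring. Qed.

Lemma enorm2D u v : enorm (u + v) ^+ 2 = enorm u ^+ 2 + 2 * dotv u v + enorm v ^+ 2.
Proof.
rewrite !enorm2 dotvDl !dotvDr (dotvC v u); ring.
Qed.

Lemma enormN u : enorm (- u) = enorm u.
Proof. by rewrite /enorm dotvNl dotvNr opprK. Qed.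

Lemma prox_sub (h : 'rV[R]_n -> R) (a p w : 'rV[R]_n) (c : R) :
  convex_fun h -> 0 < c ->
  (forall u, h w + dotv a w + c * enorm (w - p) ^+ 2 <= h u + dotv a u + c * enorm (u - p) ^+ 2) ->
  forall u, h w - dotv (a + (2 * c) *: (w - p)) (u - w) <= h u.
Proof.
move=> hc c0 hmin u.
set d := u - w.
have key : forall t : R, 0 < t -> t <= 1 ->
    - dotv a d - 2 * c * dotv (w - p) d - t * (c * dotv d d) <= h u - h w.
  move=> t t0 t1.
  have hcv := hc w u t (ltW t0) t1.
  have hm := hmin ((1 - t) *: w + t *: u).
  rewrite vecE1 -/d in hcv hm.
  have e1 : w + t *: d - p = (w - p) + t *: d by apply/rowP => j; rewrite !mxE; ring.
  rewrite e1 (enorm2D (w - p) (t *: d)) !enorm2 dotvZr in hm. rewrite dotvZr in hm. 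
  rewrite dotvZl (dotvDr w (t *: d) a) (dotvZr t d a) in hm.
  have : 0 <= t * (h u - h w + dotv a d + 2 * c * dotv (w - p) d + t * (c * dotv d d)).
    nra.
  rewrite pmulr_rge0 //; lra.
have C0 : 0 <= c * dotv d d by apply: mulr_ge0; [exact: ltW|exact: dotv_ge0].
have H := @lim_lemma _ _ _ C0 key.
rewrite dotvDl dotvZl; rewrite -/d; lra.
Qed.
Lemma line_derive (f : 'rV[R]_n -> R) gradf (x d : 'rV[R]_n) (t : R) :
  is_gradient f gradf ->
  is_derive t 1 (fun s : R => f (s *: d + x)) (dotv (gradf (t *: d + x)) d).
Proof.
move=> hg.
have [df dfv] := hg (t *: d + x).
have E : (fun h : R => h^-1 *: (((fun s : R => f (s *: d + x)) \o shift t) (h *: 1) - (fun s : R => f (s *: d + x)) t))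
   = (fun h : R => h^-1 *: ((f \o shift (t *: d + x)) (h *: d) - f (t *: d + x))).
  apply: funext => h /=.
  congr (_ *: (f _ - _)).
  by apply/rowP => j; rewrite !mxE [_%:A]mulr1; ring.
have dv : derivable f (t *: d + x) d by exact: diff_derivable.
apply: DeriveDef.
  by rewrite /derivable E.
by rewrite /derive E -/(derive f (t *: d + x) d) deriveE // dfv.
Qed.
Lemma grad_ineq (f : 'rV[R]_n -> R) gradf (x u : 'rV[R]_n) :
  convex_fun f -> is_gradient f gradf ->
  f x + dotv (gradf x) (u - x) <= f u.
Proof.
move=> hc hg.
set d := u - x.
have hd := line_derive f gradf x d 0 hg.
rewrite scale0r add0r in hd.
set h := (fun s : R => f (s *: d + x)) in hd.
have cv : (fun s : R => s^-1 *: ((h \o shift 0) (s *: 1) - h 0)) @ 0^' --> dotv (gradf x) d.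
  rewrite -(@derive_val _ _ _ _ _ _ _ hd).
  exact: (@ex_derive _ _ _ _ _ _ _ hd).
rewrite leNgt; apply/negP => H.
have H' : f u - f x < dotv (gradf x) d by lra.
have Hn0 : \forall s \near 0^', f u - f x < s^-1 *: ((h \o shift 0) (s *: 1) - h 0).
  exact: (cvgr_gt _ cv _ H').
have Hn : \forall s \near 0^'+, f u - f x < s^-1 *: ((h \o shift 0) (s *: 1) - h 0).
  move: Hn0; rewrite /dnbhs /at_right !near_withinE.
  by apply: filterS => s hs s0; apply: hs; rewrite /= gt_eqF.
have [s [[Hs0 Hs1] Hq]] := filter_ex (filterI (filterI (nbhs_right_gt 0) (nbhs_right_le ltr01)) Hn).
move: Hq => /=.
rewrite /h /= [_%:A]mulr1 addr0 scale0r add0r.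
have e : s *: d + x = (1 - s) *: x + s *: u by apply/rowP => j; rewrite !mxE; ring.
rewrite e.
have := hc x u s (ltW Hs0) Hs1.
move=> hcv hq.
have : s^-1 * (f ((1 - s) *: x + s *: u) - f x) <= f u - f x.
  rewrite ler_pdivrMl //; lra.
rewrite -[_ *: _]/(_ * _) in hq.
lra.
Qed.
Lemma quad_derive (a K t : R) :
  is_derive t 1 (fun s : R => a * s + K * (s * s)) (a + K * (2 * t)).
Proof.
have H := is_deriveD (is_deriveZ a (@is_derive_id _ R^o t 1))
     (is_deriveZ K (is_deriveM (@is_derive_id _ R^o t 1) (@is_derive_id _ R^o t 1))).
apply: is_derive_eq H _.
rewrite /= /GRing.scale /=. ring.
Qed.
Lemma cs_helper (v d : 'rV[R]_n) (r : R) : 0 < r ->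
  dotv v v <= r ^+ 2 * dotv d d -> dotv v d <= r * dotv d d.
Proof.
move=> r0 H.
have H0 := dotv_ge0 (v - r *: d).
rewrite !dotvBl !dotvBr !dotvZl !dotvZr (dotvC d v) in H0.
have : 2 * r * (dotv v d - r * dotv d d) <= 0.
  rewrite expr2 in H; lra.
rewrite pmulr_rle0 ?mulr_gt0 //; lra.
Qed.

Lemma descent (f : 'rV[R]_n -> R) gradf (L : R) (x y : 'rV[R]_n) :
  is_gradient f gradf -> 0 < L ->
  (forall u v, enorm (gradf u - gradf v) <= L * enorm (u - v)) ->
  f y <= f x + dotv (gradf x) (y - x) + L / 2 * enorm (y - x) ^+ 2.
Proof.
move=> hg L0 hL.
set d := y - x.
set a := dotv (gradf x) d.
set K := L / 2 * dotv d d.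
pose G := fun s : R => f (s *: d + x) - (a * s + K * (s * s)).
have dG : forall t : R, is_derive t 1 G (dotv (gradf (t *: d + x)) d - (a + K * (2 * t))).
  move=> t.
  exact: (is_deriveB (line_derive f gradf x d t hg) (quad_derive a K t)).
have cG : {within `[0, 1], continuous G}.
  apply: (@derivable_within_continuous R R^o G) => t _.
  by case: (dG t).
have [c c01 Hc] := MVT ltr01 (fun t _ => dG t) cG.
have c0 : 0 < c by move: c01; rewrite in_itv /= => /andP [].
have c1 : c < 1 by move: c01; rewrite in_itv /= => /andP [].
have G1 : G 1 = f y - a - K.
  rewrite /G scale1r mul1r mulr1 /d subrK; ring.
have G0 : G 0 = f x.
  rewrite /G scale0r add0r mulr0 mul0r; ring.
have Hl := hL (c *: d + x) x.
have e : c *: d + x - x = c *: d by rewrite addrK.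
rewrite e in Hl.
have Hv : dotv (gradf (c *: d + x) - gradf x) (gradf (c *: d + x) - gradf x)
   <= (L * c) ^+ 2 * dotv d d.
  rewrite -enorm2.
  have n0 := enorm_ge0 (gradf (c *: d + x) - gradf x).
  have : enorm (c *: d) ^+ 2 = c ^+ 2 * dotv d d.
    by rewrite enorm2 dotvZl dotvZr; ring.
  have n1 := enorm_ge0 (c *: d).
  move=> Ecd.
  have : enorm (gradf (c *: d + x) - gradf x) ^+ 2 <= (L * enorm (c *: d)) ^+ 2.
    by rewrite ler_pXn2r // ?nnegrE ?mulr_ge0 // ltW.
  rewrite exprMn Ecd; lra.
have := @cs_helper _ _ _ (mulr_gt0 L0 c0) Hv.
rewrite dotvBl -/a => Hcs.
move: Hc; rewrite G1 G0 subr0 mulr1 enorm2 /K => Hc.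
have : K * (2 * c) = (L * c) * dotv d d by rewrite /K; field.
rewrite /K => EK.
lra.
Qed.
Lemma prox_strong (h : 'rV[R]_n -> R) (a p w : 'rV[R]_n) (c : R) :
  convex_fun h -> 0 < c ->
  (forall u, h w + dotv a w + c * enorm (w - p) ^+ 2 <= h u + dotv a u + c * enorm (u - p) ^+ 2) ->
  forall u, h w + dotv a w + c * enorm (w - p) ^+ 2 + c * enorm (u - w) ^+ 2
            <= h u + dotv a u + c * enorm (u - p) ^+ 2.
Proof.
move=> hc c0 hmin u.
have H := @prox_sub _ _ _ _ _ hc c0 hmin u.
have e : u - p = (w - p) + (u - w) by apply/rowP => j; rewrite !mxE; ring.
rewrite e (enorm2D (w - p) (u - w)).
rewrite dotvDl dotvZl in H.
have e2 : dotv a u = dotv a w + dotv a (u - w) by rewrite dotvBr; ring.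
rewrite e2; lra.
Qed.

Lemma enorm0 : enorm (0 : 'rV[R]_n) = 0.
Proof.
rewrite /enorm /dotv big1 ?sqrtr0 // => i _; by rewrite mxE mul0r.
Qed.

Lemma dotv_eq0 (d : 'rV[R]_n) : dotv d d = 0 -> d = 0.
Proof.
rewrite /dotv => /eqP; rewrite psumr_eq0; last by move=> i _; rewrite -expr2 sqr_ge0.
move=> /allP H; apply/rowP => j; rewrite mxE.
by have := H j (mem_index_enum j); rewrite mulf_eq0 orbb => /eqP.
Qed.

Lemma ystep (f g : 'rV[R]_n -> R) gradf (L mu : R) (p w : 'rV[R]_n) :
  convex_fun f -> convex_fun g -> is_gradient f gradf -> 0 < L ->
  (forall u v, enorm (gradf u - gradf v) <= L * enorm (u - v)) ->
  0 < mu -> mu * L <= 1 ->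
  (forall u, Qf f g gradf mu p w <= Qf f g gradf mu p u) ->
  (forall u, f w + g w + (2 * mu)^-1 * enorm (u - w) ^+ 2
             <= f u + g u + (2 * mu)^-1 * enorm (u - p) ^+ 2) /\
  in_subdiff g w (- (gradf p - mu^-1 *: (p - w))).
Proof.
move=> hf hg hgr L0 hL mu0 muL hmin.
set c := (2 * mu)^-1.
have c0 : 0 < c by rewrite /c invr_gt0 mulr_gt0.
have c2 : 2 * c = mu^-1 by rewrite /c invfM mulrA divff ?mul1r // pnatr_eq0.
have hmin' : forall u, g w + dotv (gradf p) w + c * enorm (w - p) ^+ 2
     <= g u + dotv (gradf p) u + c * enorm (u - p) ^+ 2.
  move=> u; have := hmin u; rewrite /Qf !dotvBr -/c; lra.
split.
  move=> u.
  have Hs := @prox_strong _ _ _ _ _ hg c0 hmin' u.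
  have Hd := descent _ _ _ p w hgr L0 hL.
  have Hgi := grad_ineq _ _ p u hf hgr.
  have cL : L / 2 <= c.
    rewrite /c -[(2 * mu)^-1]mul1r ler_pdivlMr ?mulr_gt0 //.
    have -> : L / 2 * (2 * mu) = mu * L by field.
    done.
  have n0 := enorm_ge0 (w - p).
  have : L / 2 * enorm (w - p) ^+ 2 <= c * enorm (w - p) ^+ 2.
    by rewrite ler_wpM2r // exprn_ge0.
  rewrite !dotvBr in Hd Hgi.
  lra.
move=> u.
have H := @prox_sub _ _ _ _ _ hg c0 hmin' u.
have e : gradf p + (2 * c) *: (w - p) = - (- (gradf p - mu^-1 *: (p - w))).
  by rewrite c2; apply/rowP => j; rewrite !mxE; ring.
rewrite e dotvNl in H; lra.
Qed.

Lemma xstep (f g : 'rV[R]_n -> R) (mu : R) (lam q z : 'rV[R]_n) :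
  convex_fun f -> 0 < mu -> in_subdiff g q (- lam) ->
  (forall u, Qfun f g mu lam q z <= Qfun f g mu lam q u) ->
  f z + g z <= Qfun f g mu lam q z ->
  forall u, f z + g z + (2 * mu)^-1 * enorm (u - z) ^+ 2
             <= f u + g u + (2 * mu)^-1 * enorm (u - q) ^+ 2.
Proof.
move=> hf mu0 hsub hmin hF u.
set c := (2 * mu)^-1.
have c0 : 0 < c by rewrite /c invr_gt0 mulr_gt0.
have hmin' : forall u, f z + dotv (- lam) z + c * enorm (z - q) ^+ 2
     <= f u + dotv (- lam) u + c * enorm (u - q) ^+ 2.
  move=> v; have := hmin v; rewrite /Qfun !dotvBr !dotvNl -/c; lra.
have Hs := @prox_strong _ _ _ _ _ hf c0 hmin' u.
have Hg := hsub u.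
move: hF; rewrite /Qfun -/c => hF.
rewrite !dotvBr !dotvNl in Hg hF Hs.
lra.
Qed.
End Dot.

Theorem theorem1 (R : realType) (n : nat)
  (f g : 'rV[R]_n -> R) (gradf : 'rV[R]_n -> 'rV[R]_n) (L beta mu : R)
  (xstar : 'rV[R]_n) (x y z lam : nat -> 'rV[R]_n) :
  convex_fun f -> convex_fun g ->
  is_gradient f gradf ->
  0 < L ->
  (forall u v, enorm (gradf u - gradf v) <= L * enorm (u - v)) ->
  (forall u, f xstar + g xstar <= f u + g u) ->
  0 < beta -> beta <= 1 ->
  beta / L <= mu -> mu <= 1 / L ->
  x 0%N = y 0%N ->
  in_subdiff g (y 0%N) (- lam 0%N) ->
  (forall k u, Qfun f g mu (lam k) (y k) (z k.+1)
                 <= Qfun f g mu (lam k) (y k) u) ->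
  (forall k, x k.+1 = if f (z k.+1) + g (z k.+1) >
                          Qfun f g mu (lam k) (y k) (z k.+1)
                       then y k else z k.+1) ->
  (forall k u, Qf f g gradf mu (x k.+1) (y k.+1)
                 <= Qf f g gradf mu (x k.+1) u) ->
  (forall k, lam k.+1 = gradf (x k.+1) - mu^-1 *: (x k.+1 - y k.+1)) ->
  let F := fun u => f u + g u in
  let kn := fun k : nat =>
    \sum_(j < k) nat_of_bool (F (z j.+1) <= Qfun f g mu (lam j) (y j) (z j.+1)) in
  (forall k : nat, (1 <= k)%N ->
     F (y k) - F xstar
       <= enorm (x 0%N - xstar) ^+ 2 / (2 * mu * (k + kn k)%N%:R)) /\
  ((fun k => F (y k)) @ \oo --> F xstar) /\
  (forall (eps : R) (k : nat), 0 < eps ->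
     L * enorm (x 0%N - xstar) ^+ 2 / (2 * beta * eps) <= k%:R ->
     F (y k) - F xstar <= eps).
Proof.
move=> hf hg hgr L0 hL hopt b0 b1 mub mul1 x0y0 sub0 hz hx hy hlam F kn.
have mu0 : 0 < mu by apply: lt_le_trans mub; rewrite divr_gt0.
have muL : mu * L <= 1 by move: mul1; rewrite ler_pdivlMr.
have betaL : beta <= mu * L by move: mub; rewrite ler_pdivrMr.
set c := (2 * mu)^-1.
have c0 : 0 < c by rewrite /c invr_gt0 mulr_gt0.
have c2mu : c * (2 * mu) = 1 by rewrite /c mulVf // gt_eqF // mulr_gt0.
set Fs := F xstar.
have Fopt : forall u, Fs <= F u by move=> u; exact: hopt.
have nn : forall v : 'rV[R]_n, 0 <= c * enorm v ^+ 2.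
  by move=> v; apply: mulr_ge0; [exact: ltW|apply: exprn_ge0; exact: enorm_ge0].
have Hy : forall k, (forall u, F (y k.+1) + c * enorm (u - y k.+1) ^+ 2
                          <= F u + c * enorm (u - x k.+1) ^+ 2)
                    /\ in_subdiff g (y k.+1) (- lam k.+1).
  move=> k.
  have [H1 H2] := @ystep _ _ f g gradf L mu _ _ hf hg hgr L0 hL mu0 muL (hy k).
  by split => //; rewrite hlam.
have Hsub : forall k, in_subdiff g (y k) (- lam k).
  by case => // k; have [] := Hy k.
pose b j := F (z j.+1) <= Qfun f g mu (lam j) (y j) (z j.+1).
have Hxb : forall k, b k -> x k.+1 = z k.+1 /\
    forall u, F (x k.+1) + c * enorm (u - x k.+1) ^+ 2 <= F u + c * enorm (u - y k) ^+ 2.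
  move=> k bk.
  have ex : x k.+1 = z k.+1 by rewrite hx ltNge; move: bk; rewrite /b /F => ->.
  split => //; rewrite ex => u.
  exact: (@xstep _ _ f g mu _ _ _ hf mu0 (Hsub k) (hz k) bk u).
have Hxn : forall k, ~~ b k -> x k.+1 = y k.
  by move=> k bk; rewrite hx ltNge; move: bk; rewrite /b /F => ->.
have mono1 : forall k, F (y k.+1) <= F (x k.+1).
  move=> k; have [H _] := Hy k; have := H (x k.+1).
  rewrite subrr enorm0 expr0n /= mulr0 addr0.
  have := nn (x k.+1 - y k.+1); lra.
have mono2 : forall k, F (x k.+1) <= F (y k).
  move=> k; case bk : (b k).
    have [_ H] := Hxb k bk; have := H (y k).
    rewrite subrr enorm0 expr0n /= mulr0 addr0.
    have := nn (y k - x k.+1); lra.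
  by rewrite Hxn ?bk.
have monoY : forall j m, (j <= m)%N -> F (y m) <= F (y j).
  move=> j; elim => [|m IH]; first by rewrite leqn0 => /eqP ->.
  rewrite leq_eqVlt => /orP [/eqP -> //|].
  rewrite ltnS => /IH H.
  by apply: le_trans H; apply: le_trans (mono1 m) (mono2 m).
have Hsum : forall k, \sum_(j < k) (F (y j.+1) - Fs + (b j)%:R * (F (x j.+1) - Fs))
      + c * enorm (xstar - y k) ^+ 2 <= c * enorm (xstar - y 0%N) ^+ 2.
  elim => [|k IH]; first by rewrite big_ord0 add0r.
  rewrite big_ord_recr /=.
  have [H _] := Hy k; have := H xstar.
  case bk : (b k).
    have [_ H2] := Hxb k bk; have := H2 xstar.
    rewrite /= mul1r -/Fs; lra.
  rewrite /= mul0r addr0 Hxn ?bk // -/Fs; lra.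
have P1 : forall k, (1 <= k)%N ->
    (k + kn k)%N%:R * (F (y k) - Fs) <= c * enorm (x 0%N - xstar) ^+ 2.
  move=> k k1.
  have eN : (k + kn k)%N%:R * (F (y k) - Fs)
      = \sum_(j < k) ((F (y k) - Fs) + (b j)%:R * (F (y k) - Fs)).
    rewrite big_split /= sumr_const card_ord -mulr_suml natrD mulrDl -natr_sum mulr_natl.
    done.
  rewrite eN.
  have := Hsum k.
  have := nn (xstar - y k).
  have -> : enorm (xstar - y 0%N) = enorm (x 0%N - xstar) by rewrite -x0y0 -opprB enormN.
  have : \sum_(j < k) ((F (y k) - Fs) + (b j)%:R * (F (y k) - Fs))
      <= \sum_(j < k) (F (y j.+1) - Fs + (b j)%:R * (F (x j.+1) - Fs)).
    apply: ler_sum => j _.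
    have h1 : F (y k) <= F (y j.+1) by apply: monoY; exact: ltn_ord.
    have h2 := mono1 j.
    case: (b j); rewrite /= ?mul1r ?mul0r; lra.
  lra.
have P1' : forall k, (1 <= k)%N ->
    F (y k) - Fs <= enorm (x 0%N - xstar) ^+ 2 / (2 * mu * (k + kn k)%N%:R).
  move=> k k1.
  have N0 : 0 < (k + kn k)%N%:R :> R by rewrite ltr0n addn_gt0 k1.
  rewrite ler_pdivlMr ?mulr_gt0 //.
  have m2 : 0 <= 2 * mu by apply: mulr_ge0; [lra|exact: ltW].
  have H := ler_wpM2l m2 (P1 k k1).
  have e1 : 2 * mu * (c * enorm (x 0%N - xstar) ^+ 2) = enorm (x 0%N - xstar) ^+ 2.
    have e0 : 2 * mu * (c * enorm (x 0%N - xstar) ^+ 2) = c * (2 * mu) * enorm (x 0%N - xstar) ^+ 2 by ring.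
    by rewrite e0 c2mu mul1r.
  rewrite e1 in H.
  have -> : (F (y k) - Fs) * (2 * mu * (k + kn k)%N%:R)
     = 2 * mu * ((k + kn k)%N%:R * (F (y k) - Fs)) by ring.
  exact: H.
have P3 : forall (eps : R) (k : nat), 0 < eps ->
     L * enorm (x 0%N - xstar) ^+ 2 / (2 * beta * eps) <= k%:R ->
     F (y k) - Fs <= eps.
  move=> eps k e0 Hk.
  have D0 : 0 <= enorm (x 0%N - xstar) ^+ 2 by apply: exprn_ge0; exact: enorm_ge0.
  have E0 : 0 <= F (y k) - Fs by rewrite subr_ge0; exact: Fopt.
  have be0 : 0 < 2 * beta * eps by rewrite !mulr_gt0 //; lra.
  rewrite ler_pdivrMr // in Hk.
  case: k Hk E0 => [|k] Hk E0.
    rewrite mul0r in Hk.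
    have LD : enorm (x 0%N - xstar) ^+ 2 = 0.
      apply/eqP; rewrite eq_le D0 andbT.
      by move: Hk; rewrite pmulr_rle0.
    rewrite enorm2 in LD.
    have ex := dotv_eq0 _ _ _ LD.
    have -> : y 0%N = xstar by rewrite -x0y0; apply/eqP; rewrite -subr_eq0; apply/eqP.
    by rewrite subrr ltW.
  have P := P1 k.+1 isT.
  have Kr0 : 0 < k.+1%:R :> R by rewrite ltr0n.
  have NK : k.+1%:R <= (k.+1 + kn k.+1)%N%:R :> R by rewrite ler_nat leq_addr.
  have h1 : k.+1%:R * (F (y k.+1) - Fs) <= (k.+1 + kn k.+1)%N%:R * (F (y k.+1) - Fs).
    by rewrite ler_wpM2r.
  have cb : c * (2 * beta) <= L.
    have : c * (2 * beta) <= c * (2 * (mu * L)).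
      by apply: ler_wpM2l; [exact: ltW | lra].
    have -> : c * (2 * (mu * L)) = c * (2 * mu) * L by ring.
    by rewrite c2mu mul1r.
  have h2 : c * enorm (x 0%N - xstar) ^+ 2 * (2 * beta) <= L * enorm (x 0%N - xstar) ^+ 2.
    have -> : c * enorm (x 0%N - xstar) ^+ 2 * (2 * beta) = enorm (x 0%N - xstar) ^+ 2 * (c * (2 * beta)) by ring.
    rewrite [L * _]mulrC; exact: ler_wpM2l.
  have b20 : 0 <= 2 * beta by lra.
  have h3 := ler_wpM2r b20 (le_trans h1 P).
  have h4 : k.+1%:R * (2 * beta) * (F (y k.+1) - Fs) <= k.+1%:R * (2 * beta) * eps.
    have -> : k.+1%:R * (2 * beta) * (F (y k.+1) - Fs) = k.+1%:R * (F (y k.+1) - Fs) * (2 * beta) by ring.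
    have -> : k.+1%:R * (2 * beta) * eps = k.+1%:R * (2 * beta * eps) by ring.
    exact: le_trans h3 (le_trans h2 Hk).
  by rewrite ler_pM2l ?mulr_gt0 // in h4; lra.
split => //; split => //.
apply/cvgrPdist_le => eps e0.
have D0 : 0 <= enorm (x 0%N - xstar) ^+ 2 by apply: exprn_ge0; exact: enorm_ge0.
have B0 : 0 <= L * enorm (x 0%N - xstar) ^+ 2 / (2 * beta * eps).
  by apply: divr_ge0; [apply: mulr_ge0; [exact: ltW|exact: D0] | apply: ltW; rewrite !mulr_gt0 //; lra].
have HB := archi_boundP B0.
apply: filterS (nbhs_infty_ge (Num.Def.archi_bound (L * enorm (x 0%N - xstar) ^+ 2 / (2 * beta * eps)))).
move=> k Nk /=.
have Hk : L * enorm (x 0%N - xstar) ^+ 2 / (2 * beta * eps) <= k%:R.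
  by apply: (le_trans (ltW HB)); rewrite ler_nat.
have := P3 eps k e0 Hk.
have := Fopt (y k).
rewrite distrC ger0_norm; first by [].
by rewrite subr_ge0.
Qed.
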